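(* A system $C=(1,c_2,c_3,c_4,c_5,2c_5-c_2)$ is canonical and its subsystem $(1,c_2,c_3,c_4,c_5)$ is noncanonical if and only if $C=(1,2,3,c_4,c_4+1,2c_4)$ and $c_4>4$.
   Context: A system is a tuple $C=(c_1,\dots,c_n)$ of integers with $1=c_1<c_2<\dots<c_n$; for $k\le n$, $(c_1,\dots,c_k)$ is a subsystem. For a positive integer $v$, $\mathrm{opt}_C(v)$ is the minimum of $\sum_i x_i$ over $x\in\mathbb{Z}_{\ge0}^n$ with $\sum_i c_ix_i=v$. The greedy representation of $v$ is produced by: for $i=n$ down to $1$, while $c_i\le$ remaining value, take a coin $c_i$. $\mathrm{grd}_C(v)$ is its number of coins. A positive integer $w$ is a counterexample if $\mathrm{opt}_C(w)<\mathrm{grd}_C(w)$; $C$ is canonical if it has none, noncanonical otherwise. *)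

(* Defs.v *)
From mathcomp Require Import all_boot.
Set Implicit Arguments. Unset Strict Implicit. Unset Printing Implicit Defensive.

Definition is_system (C : seq nat) : Prop :=
  head 0 C = 1 /\ sorted ltn C.

Definition is_repr (C : seq nat) (x : seq nat) (v : nat) : Prop :=
  size x = size C /\ \sum_(i < size C) nth 0 C i * nth 0 x i = v.

Definition is_opt (C : seq nat) (v k : nat) : Prop :=
  (exists x, is_repr C x v /\ sumn x = k) /\
  (forall x, is_repr C x v -> k <= sumn x).

(* Greedy: process coins from largest to smallest, taking as many copies of
   c_i as fit in the remaining value (for c_i >= 1 this is v %/ c_i copies). *)
Fixpoint grd_aux (cs : seq nat) (v : nat) : nat :=
  match cs with
  | [::] => 0
  | c :: cs' => v %/ c + grd_aux cs' (v %% c)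
  end.
Definition grd (C : seq nat) (v : nat) : nat := grd_aux (rev C) v.

Definition counterexample (C : seq nat) (w : nat) : Prop :=
  0 < w /\ exists k, is_opt C w k /\ k < grd C w.

Definition canonical (C : seq nat) : Prop := forall w, ~ counterexample C w.

(* Main.v *)
Require Import Defs.
From mathcomp Require Import all_boot zify.
From Stdlib Require Import Classical.
Set Warnings "-notation-overridden".
Lemma repr5 a b c d x v : is_repr [:: 1; a; b; c; d] x v <->
  exists x1 x2 x3 x4 x5, x = [:: x1; x2; x3; x4; x5] /\ x1 + a*x2 + b*x3 + c*x4 + d*x5 = v.
Proof.
rewrite /is_repr /= !big_ord_recl big_ord0 /=; split.
- case=> + <-.
  case: x => [|x1 [|x2 [|x3 [|x4 [|x5 [|x6 x]]]]]] //= _.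
  exists x1, x2, x3, x4, x5; split=> //; lia.
- case=> [x1 [x2 [x3 [x4 [x5 [-> <-]]]]]]; split=> //=; lia.
Qed.
Lemma repr6 a b c d e x v : is_repr [:: 1; a; b; c; d; e] x v <->
  exists x1 x2 x3 x4 x5 x6, x = [:: x1; x2; x3; x4; x5; x6] /\ x1 + a*x2 + b*x3 + c*x4 + d*x5 + e*x6 = v.
Proof.
rewrite /is_repr /= !big_ord_recl big_ord0 /=; split.
- case=> + <-.
  case: x => [|x1 [|x2 [|x3 [|x4 [|x5 [|x6 [|x7 x]]]]]]] //= _.
  exists x1, x2, x3, x4, x5, x6; split=> //; lia.
- case=> [x1 [x2 [x3 [x4 [x5 [x6 [-> <-]]]]]]]; split=> //=; lia.
Qed.
Lemma dm1 e r : 0 < e -> r < e -> (e + r) %/ e = 1 /\ (e + r) %% e = r.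
Proof. move=> He Hr; rewrite modnDl modn_small // divnDl ?dvdnn // divnn He divn_small //. Qed.

Lemma grd_top d cs w : 0 < d -> d <= w -> grd_aux (d :: cs) w = 1 + grd_aux (d :: cs) (w - d).
Proof.
move=> Hd Hw /=; rewrite -{1 2}(subnKC Hw) modnDl divnDl ?dvdnn // divnn Hd; lia.
Qed.

Lemma grd5_top a b c d w : 0 < d -> d <= w -> grd [:: 1; a; b; c; d] w = 1 + grd [:: 1; a; b; c; d] (w - d).
Proof. exact: grd_top. Qed.

Lemma grd5_small a b c d r : r < a -> a < b -> b < c -> c < d ->
  grd [:: 1; a; b; c; d] r = r.
Proof.
move=> ha hb hc hd; rewrite /grd /=.
rewrite (divn_small (_ : r < d)); last lia.
rewrite (modn_small (_ : r < d)); last lia.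
rewrite (divn_small (_ : r < c)); last lia.
rewrite (modn_small (_ : r < c)); last lia.
rewrite (divn_small (_ : r < b)); last lia.
rewrite (modn_small (_ : r < b)); last lia.
rewrite (divn_small (_ : r < a)); last lia.
rewrite (modn_small (_ : r < a)); last lia.
rewrite ?divn1 ?modn1; lia.
Qed.

Lemma grd5_rep a b c d v : 0 < a -> 0 < b -> 0 < c -> 0 < d ->
  exists y, is_repr [:: 1; a; b; c; d] y v /\ sumn y = grd [:: 1; a; b; c; d] v.
Proof.
move=> ha hb hc hd.
exists [:: v %% d %% c %% b %% a; v %% d %% c %% b %/ a; v %% d %% c %/ b; v %% d %/ c; v %/ d].
split; last by rewrite /grd /= ?divn1 ?modn1; lia.
apply/repr5; do 5 eexists; split; first reflexivity.
have := divn_eq v d; have := divn_eq (v %% d) c; have := divn_eq (v %% d %% c) b;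
have := divn_eq (v %% d %% c %% b) a; lia.
Qed.

Lemma ex_min (P : nat -> Prop) : (exists n, P n) -> exists n, P n /\ forall m, P m -> n <= m.
Proof.
case=> N; elim: N {-2}N (leqnn N) => [|N IH] n Hn Pn.
  exists n; split=> // m _; move: Hn; lia.
case: (classic (exists m, m < n /\ P m)) => [[m [Hm Pm]]|Hno].
  apply: (IH m) => //; lia.
exists n; split=> // m Pm; case: (leqP n m) => // Hlt; exfalso; apply: Hno; by exists m.
Qed.

Lemma grd_aux0 cs : grd_aux cs 0 = 0.
Proof. by elim: cs => //= c cs IH; rewrite div0n mod0n IH. Qed.

Lemma canon_le C w x : canonical C -> is_repr C x w -> grd C w <= sumn x.
Proof.
move=> HC Hx; case: (leqP (grd C w) (sumn x)) => // Hlt; exfalso.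
have [n [[y [Hy Hn]] Hmin]] := ex_min (fun n => exists y, is_repr C y w /\ sumn y = n)
  (ex_intro _ (sumn x) (ex_intro _ x (conj Hx erefl))).
apply: (HC w); split.
  case: w Hx Hlt {Hy Hmin} => // Hx; rewrite /grd grd_aux0 //.
exists n; split; last first.
  by apply: leq_ltn_trans Hlt; apply: Hmin; exists x.
split; first by exists y.
move=> z Hz; apply: Hmin; by exists z.
Qed.

Lemma le_canon C : (forall w x, is_repr C x w -> grd C w <= sumn x) -> canonical C.
Proof.
move=> H w [_ [k [[[x [Hx <-]] _] Hk]]].
by move: (H _ _ Hx); rewrite leqNgt Hk.
Qed.

Lemma noncanon_ex C : ~ canonical C -> exists w x, is_repr C x w /\ sumn x < grd C w.
Proof.
move=> H; apply: NNPP => H2; apply: H => w [_ [k [[[x [Hx Hs]] _] Hk]]].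
apply: H2; exists w, x; split=> //; by rewrite Hs.
Qed.


Lemma fwd a b c d : 1 < a -> a < b -> b < c -> c < d -> d < 2*d - a ->
  canonical [:: 1; a; b; c; d; 2*d - a] -> ~ canonical [:: 1; a; b; c; d] ->
  a = 2 /\ b = 3 /\ d = c + 1 /\ 4 < c.
Proof.
move=> ha hb hc hd he HC0 HS0.
set e := 2*d - a in he HC0 *.
have HC6 : forall x1 x2 x3 x4 x5 x6,
  grd [:: 1; a; b; c; d; e] (x1 + a*x2 + b*x3 + c*x4 + d*x5 + e*x6) <= x1+x2+x3+x4+x5+x6.
  move=> x1 x2 x3 x4 x5 x6.
  have := canon_le _ _ _ HC0 (proj2 (repr6 _ _ _ _ _ _ _) (ex_intro _ x1 (ex_intro _ x2 (ex_intro _ x3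
    (ex_intro _ x4 (ex_intro _ x5 (ex_intro _ x6 (conj erefl erefl)))))))).
  rewrite /=; lia.
have grdC : forall v, grd [:: 1; a; b; c; d; e] v = v %/ e + grd [:: 1; a; b; c; d] (v %% e) by [].
have [w0 [[x [Hx Hlt]] Hmin0]] := ex_min _ (noncanon_ex _ HS0).
have Hmin : forall m y, is_repr [:: 1; a; b; c; d] y m -> m < w0 -> grd [:: 1; a; b; c; d] m <= sumn y.
  move=> m y Hy Hm; case: (leqP (grd [:: 1; a; b; c; d] m) (sumn y)) => // Hl.
  by have := Hmin0 m (ex_intro _ y (conj Hy Hl)); rewrite leqNgt Hm.
have F3 : forall ci, 0 < ci -> ci <= w0 ->
   (exists y, is_repr [:: 1; a; b; c; d] y (w0 - ci) /\ sumn y + 1 = sumn x) ->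
   (forall z m, is_repr [:: 1; a; b; c; d] z m -> exists z', is_repr [:: 1; a; b; c; d] z' (m + ci) /\ sumn z' = sumn z + 1) ->
   w0 - ci < d.
  move=> ci hci hciw [y [Hy Hsy]] Hadd; case: (leqP d (w0 - ci)) => // Hdw; exfalso.
  have h1 := Hmin _ _ Hy (ltac:(lia)).
  rewrite grd5_top in h1; [|lia|lia].
  have [y2 [Hy2 Hs2]] := grd5_rep a b c d (w0 - ci - d) (ltac:(lia)) (ltac:(lia)) (ltac:(lia)) (ltac:(lia)).
  have [z' [Hz' Hsz']] := Hadd _ _ Hy2.
  have h2 := Hmin _ _ Hz' (ltac:(lia)).
  have := grd5_top a b c d w0 (ltac:(lia)) (ltac:(lia)).
  have E : w0 - ci - d + ci = w0 - d by lia.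
  rewrite E in h2; lia.
have Hadd : forall (i : nat) z m, i < 4 -> is_repr [:: 1; a; b; c; d] z m ->
   exists z', is_repr [:: 1; a; b; c; d] z' (m + nth 0 [:: 1; a; b; c; d] i) /\ sumn z' = sumn z + 1.
  move=> i z m hi /repr5 [z1 [z2 [z3 [z4 [z5 [-> Hm]]]]]].
  case: i hi => [|[|[|[|i]]]] // _.
  - exists [:: z1.+1; z2; z3; z4; z5]; split; last by rewrite /=; lia.
    apply/repr5; do 5 eexists; split; first reflexivity; rewrite /=; lia.
  - exists [:: z1; z2.+1; z3; z4; z5]; split; last by rewrite /=; lia.
    apply/repr5; do 5 eexists; split; first reflexivity; rewrite /=; lia.
  - exists [:: z1; z2; z3.+1; z4; z5]; split; last by rewrite /=; lia.
    apply/repr5; do 5 eexists; split; first reflexivity; rewrite /=; lia.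
  - exists [:: z1; z2; z3; z4.+1; z5]; split; last by rewrite /=; lia.
    apply/repr5; do 5 eexists; split; first reflexivity; rewrite /=; lia.
move/repr5: Hx => [x1 [x2 [x3 [x4 [x5 [Ex Hw0]]]]]].
subst x; rewrite /= in Hlt.
have F1 : e <= w0.
  case: (leqP e w0) => // Hlt'; exfalso.
  have := HC6 x1 x2 x3 x4 x5 0.
  rewrite muln0 addn0 Hw0 grdC divn_small // modn_small //; lia.
have F2 : x5 = 0.
  case E5: x5 => [//|k]; exfalso; rewrite E5 in Hw0 Hlt.
  have Hy : is_repr [:: 1; a; b; c; d] [:: x1; x2; x3; x4; k] (w0 - d).
    by apply/repr5; do 5 eexists; split; [reflexivity| nia].
  have := Hmin _ _ Hy (ltac:(nia)).
  rewrite (grd5_top a b c d w0) in Hlt; [|lia|nia].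
  rewrite /=; lia.
subst x5.
have K1 : 0 < x1 -> w0 - 1 < d.
  case: x1 F3 Hw0 Hlt => [//|k] F3 Hw0 Hlt _.
  apply: (F3 1); [lia | nia | | by move=> z m Hz; exact: (Hadd 0 z m erefl Hz)].
  exists [:: k; x2; x3; x4; 0]; split; last by rewrite /=; lia.
  by apply/repr5; do 5 eexists; split; [reflexivity| nia].
have K2 : 0 < x2 -> w0 - a < d.
  case: x2 F3 Hw0 Hlt => [//|k] F3 Hw0 Hlt _.
  apply: (F3 a); [lia | nia | | by move=> z m Hz; exact: (Hadd 1 z m erefl Hz)].
  exists [:: x1; k; x3; x4; 0]; split; last by rewrite /=; lia.
  by apply/repr5; do 5 eexists; split; [reflexivity| nia].
have K3 : 0 < x3 -> w0 - b < d.
  case: x3 F3 Hw0 Hlt => [//|k] F3 Hw0 Hlt _.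
  apply: (F3 b); [lia | nia | | by move=> z m Hz; exact: (Hadd 2 z m erefl Hz)].
  exists [:: x1; x2; k; x4; 0]; split; last by rewrite /=; lia.
  by apply/repr5; do 5 eexists; split; [reflexivity| nia].
have K4 : 0 < x4 -> w0 - c < d.
  case: x4 F3 Hw0 Hlt => [//|k] F3 Hw0 Hlt _.
  apply: (F3 c); [lia | nia | | by move=> z m Hz; exact: (Hadd 3 z m erefl Hz)].
  exists [:: x1; x2; x3; k; 0]; split; last by rewrite /=; lia.
  by apply/repr5; do 5 eexists; split; [reflexivity| nia].
have Hda : d < a + c.
  case: (posnP x1) => [z1|p1]; last by have := K1 p1; lia.
  case: (posnP x2) => [z2|p2]; last by have := K2 p2; lia.
  case: (posnP x3) => [z3|p3]; last by have := K3 p3; lia.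
  case: (posnP x4) => [z4|p4]; last by have := K4 p4; lia.
  subst x1 x2 x3 x4; rewrite !muln0 in Hw0; lia.
have Hd2 : a + c <= d + 1.
  have := HC6 0 0 0 1 1 0.
  have E: 0 + a*0 + b*0 + c*1 + d*1 + e*0 = e + (c + a - d) by lia.
  rewrite E grdC; have [-> ->] := dm1 e (c + a - d) (ltac:(lia)) (ltac:(lia)).
  rewrite grd5_small; lia.
have Hd : d = a + c - 1 by lia.
have z1 : x1 = 0 by case: (posnP x1) => // p; have := K1 p; lia.
have z2 : x2 = 0 by case: (posnP x2) => // p; have := K2 p; lia.
have z3 : x3 = 0 by case: (posnP x3) => // p; have := K3 p; lia.
subst x1 x2 x3; rewrite !muln0 in Hw0.
have [Ha Ex4] : a = 2 /\ x4 = 2.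
  case: x4 F3 K4 Hw0 Hlt => [|[|[|k]]] F3 K4 Hw0 Hlt.
  - lia.
  - lia.
  - lia.
  - have := K4 erefl; nia.
subst a x4.
have Hcb : c <> b + 1.
  move=> Ecb; move: Hlt; rewrite (grd5_top 2 b c d w0); [|lia|lia].
  rewrite (_ : w0 - d = b); last lia.
  rewrite /grd /= (divn_small (_ : b < d)); last lia.
  rewrite (modn_small (_ : b < d)); last lia.
  rewrite (divn_small (_ : b < c)); last lia.
  rewrite (modn_small (_ : b < c)); last lia.
  rewrite divnn modnn (_ : 0 < b); last lia.
  rewrite div0n mod0n; lia.
have Hb : b <= 3.
  have := HC6 0 0 1 1 0 0.
  have E: 0 + 2*0 + b*1 + c*1 + d*0 + e*0 = b + c by lia.
  rewrite E grdC (divn_small (_ : b + c < e)); last lia.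
  rewrite (modn_small (_ : b + c < e)); last lia.
  rewrite (grd5_top 2 b c d); [|lia|lia].
  rewrite (_ : b + c - d = b - 1); last lia.
  rewrite /grd /= (divn_small (_ : b - 1 < d)); last lia.
  rewrite (modn_small (_ : b - 1 < d)); last lia.
  rewrite (divn_small (_ : b - 1 < c)); last lia.
  rewrite (modn_small (_ : b - 1 < c)); last lia.
  rewrite (divn_small (_ : b - 1 < b)); last lia.
  rewrite (modn_small (_ : b - 1 < b)); last lia.
  rewrite ?divn1 ?modn1; lia.
split; [done|split; [lia|split; lia]].
Qed.


Definition ceil3 t := t %/ 3 + t %% 3 %/ 2 + t %% 3 %% 2.
Definition hh c r := if r < c then ceil3 r else if r == c then 1 else 1 + ceil3 (r - c - 1).

Lemma hh_sub c r ci : 4 < c -> (ci = 1 \/ ci = 2 \/ ci = 3 \/ ci = c \/ ci = c+1) -> ci <= r -> r < 2*c ->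
  hh c r <= 1 + hh c (r - ci).
Proof.
move=> hc; case=> [->|[->|[->|[->|->]]]] h1 h2; rewrite /hh /ceil3;
  repeat case: ifP => ?; lia.
Qed.

Lemma hh_wrap c r ci : 4 < c -> (ci = 1 \/ ci = 2 \/ ci = 3 \/ ci = c \/ ci = c+1) -> r < ci ->
  hh c r <= hh c (2*c + r - ci).
Proof.
move=> hc; case=> [->|[->|[->|[->|->]]]] h1; rewrite /hh /ceil3;
  repeat case: ifP => ?; lia.
Qed.

Lemma grdS_hh c r : 4 < c -> r < 2*c -> grd [:: 1; 2; 3; c; c+1] r = hh c r.
Proof.
move=> hc hr; rewrite /hh /ceil3.
case: (ltnP r c) => h1.
  rewrite /grd /= (divn_small (_ : r < c+1)); last lia.
  rewrite (modn_small (_ : r < c+1)); last lia.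
  rewrite (divn_small (_ : r < c)); last lia.
  rewrite (modn_small (_ : r < c)); last lia.
  rewrite ?divn1 ?modn1; lia.
case: eqP => [->|hne].
  rewrite /grd /= (divn_small (_ : c < c+1)); last lia.
  rewrite (modn_small (_ : c < c+1)); last lia.
  rewrite divnn modnn (_ : 0 < c); last lia.
  rewrite ?div0n ?mod0n ?divn1 ?modn1; lia.
rewrite (grd5_top 2 3 c (c+1) r); [|lia|lia].
rewrite /grd /= (divn_small (_ : r - (c+1) < c+1)); last lia.
rewrite (modn_small (_ : r - (c+1) < c+1)); last lia.
rewrite (divn_small (_ : r - (c+1) < c)); last lia.
rewrite (modn_small (_ : r - (c+1) < c)); last lia.
rewrite ?divn1 ?modn1 (_ : r - (c+1) = r - c - 1); last lia.
lia.
Qed.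

Lemma grdC_dec c q r : 4 < c -> r < 2*c ->
  grd [:: 1; 2; 3; c; c+1; 2*c] (q * (2*c) + r) = q + hh c r.
Proof.
move=> hc hr.
have -> : grd [:: 1; 2; 3; c; c+1; 2*c] (q * (2*c) + r) =
  (q * (2*c) + r) %/ (2*c) + grd [:: 1; 2; 3; c; c+1] ((q * (2*c) + r) %% (2*c)) by [].
rewrite divnMDl ?modnMDl; last lia.
rewrite divn_small // modn_small // grdS_hh //; lia.
Qed.

Lemma grdC_step c w ci : 4 < c ->
  (ci = 1 \/ ci = 2 \/ ci = 3 \/ ci = c \/ ci = c+1 \/ ci = 2*c) -> ci <= w ->
  grd [:: 1; 2; 3; c; c+1; 2*c] w <= 1 + grd [:: 1; 2; 3; c; c+1; 2*c] (w - ci).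
Proof.
move=> hc hci hw.
have h2c : 0 < 2*c by lia.
have Ew := divn_eq w (2*c); have hr := ltn_pmod w h2c.
set q := w %/ (2*c) in Ew; set r := w %% (2*c) in Ew hr.
rewrite Ew grdC_dec //.
case: (leqP ci r) => hcr.
  have hci' : ci = 1 \/ ci = 2 \/ ci = 3 \/ ci = c \/ ci = c+1.
    case: hci => [|[|[|[|[|]]]]]; try tauto; lia.
  rewrite (_ : q * (2*c) + r - ci = q * (2*c) + (r - ci)); last lia.
  rewrite grdC_dec; last lia; last done.
  have := hh_sub c r ci hc hci' hcr hr; lia.
case: q Ew => [|q] Ew.
  exfalso; move: Ew hw hcr; rewrite mul0n add0n => <-; lia.
rewrite (_ : q.+1 * (2*c) + r - ci = q * (2*c) + (2*c + r - ci)); last first.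
  rewrite mulSn; case: hci => [|[|[|[|[|]]]]] E; subst ci; lia.
rewrite grdC_dec //; last by case: hci => [|[|[|[|[|]]]]] E; subst ci; lia.
case: hci => [|[|[|[|[|]]]]] E.
- have := hh_wrap c r ci hc (or_introl E) hcr; lia.
- have := hh_wrap c r ci hc (or_intror (or_introl E)) hcr; lia.
- have := hh_wrap c r ci hc (or_intror (or_intror (or_introl E))) hcr; lia.
- have := hh_wrap c r ci hc (or_intror (or_intror (or_intror (or_introl E)))) hcr; lia.
- have := hh_wrap c r ci hc (or_intror (or_intror (or_intror (or_intror E)))) hcr; lia.
- subst ci; rewrite (_ : 2*c + r - 2*c = r); lia.
Qed.

Lemma canonC c : 4 < c -> canonical [:: 1; 2; 3; c; c+1; 2*c].
Proof.
move=> hc; apply: le_canon => w x /repr6 [x1 [x2 [x3 [x4 [x5 [x6 [-> <-]]]]]]] /=.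
rewrite addn0.
move Hn: (x1 + (x2 + (x3 + (x4 + (x5 + x6))))) => n.
elim: n x1 x2 x3 x4 x5 x6 Hn => [|n IH] x1 x2 x3 x4 x5 x6 Hn.
  have -> : x1 = 0 by lia. have -> : x2 = 0 by lia. have -> : x3 = 0 by lia. have -> : x4 = 0 by lia. have -> : x5 = 0 by lia. have -> : x6 = 0 by lia.
  by rewrite !muln0 /grd grd_aux0.
set g := grd _.
case: x1 Hn => [|k1] Hn.
  case: x2 Hn => [|k2] Hn.
    case: x3 Hn => [|k3] Hn.
      case: x4 Hn => [|k4] Hn.
        case: x5 Hn => [|k5] Hn.
          case: x6 Hn => [|k6] Hn; first lia.
          have := IH 0 0 0 0 0 k6 (ltac:(lia)).
          have := grdC_step c (0 + 2*0 + 3*0 + c*0 + (c+1)*0 + 2*c*k6.+1) (2*c) hc (ltac:(tauto)) (ltac:(nia)).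
          rewrite (_ : 0 + 2*0 + 3*0 + c*0 + (c+1)*0 + 2*c*k6.+1 - 2*c = 0 + 2*0 + 3*0 + c*0 + (c+1)*0 + 2*c*k6); last nia.
          rewrite /g; lia.
        have := IH 0 0 0 0 k5 x6 (ltac:(lia)).
        have := grdC_step c (0 + 2*0 + 3*0 + c*0 + (c+1)*k5.+1 + 2*c*x6) (c+1) hc (ltac:(tauto)) (ltac:(nia)).
        rewrite (_ : 0 + 2*0 + 3*0 + c*0 + (c+1)*k5.+1 + 2*c*x6 - (c+1) = 0 + 2*0 + 3*0 + c*0 + (c+1)*k5 + 2*c*x6); last nia.
        rewrite /g; lia.
      have := IH 0 0 0 k4 x5 x6 (ltac:(lia)).
      have := grdC_step c (0 + 2*0 + 3*0 + c*k4.+1 + (c+1)*x5 + 2*c*x6) c hc (ltac:(tauto)) (ltac:(nia)).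
      rewrite (_ : 0 + 2*0 + 3*0 + c*k4.+1 + (c+1)*x5 + 2*c*x6 - c = 0 + 2*0 + 3*0 + c*k4 + (c+1)*x5 + 2*c*x6); last nia.
      rewrite /g; lia.
    have := IH 0 0 k3 x4 x5 x6 (ltac:(lia)).
    have := grdC_step c (0 + 2*0 + 3*k3.+1 + c*x4 + (c+1)*x5 + 2*c*x6) 3 hc (ltac:(tauto)) (ltac:(nia)).
    rewrite (_ : 0 + 2*0 + 3*k3.+1 + c*x4 + (c+1)*x5 + 2*c*x6 - 3 = 0 + 2*0 + 3*k3 + c*x4 + (c+1)*x5 + 2*c*x6); last nia.
    rewrite /g; lia.
  have := IH 0 k2 x3 x4 x5 x6 (ltac:(lia)).
  have := grdC_step c (0 + 2*k2.+1 + 3*x3 + c*x4 + (c+1)*x5 + 2*c*x6) 2 hc (ltac:(tauto)) (ltac:(nia)).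
  rewrite (_ : 0 + 2*k2.+1 + 3*x3 + c*x4 + (c+1)*x5 + 2*c*x6 - 2 = 0 + 2*k2 + 3*x3 + c*x4 + (c+1)*x5 + 2*c*x6); last nia.
  rewrite /g; lia.
have := IH k1 x2 x3 x4 x5 x6 (ltac:(lia)).
have := grdC_step c (k1.+1 + 2*x2 + 3*x3 + c*x4 + (c+1)*x5 + 2*c*x6) 1 hc (ltac:(tauto)) (ltac:(nia)).
rewrite (_ : k1.+1 + 2*x2 + 3*x3 + c*x4 + (c+1)*x5 + 2*c*x6 - 1 = k1 + 2*x2 + 3*x3 + c*x4 + (c+1)*x5 + 2*c*x6); last nia.
rewrite /g; lia.
Qed.

Lemma noncanonS c : 4 < c -> ~ canonical [:: 1; 2; 3; c; c+1].
Proof.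
move=> hc H; apply: (H (2*c)); split; first lia.
exists 2; split; first split.
- exists [:: 0; 0; 0; 2; 0]; split=> //; apply/repr5; do 5 eexists; split; first reflexivity; lia.
- move=> x /repr5 [x1 [x2 [x3 [x4 [x5 [-> Hv]]]]]] /=.
  case: (leqP 2 (x1 + (x2 + (x3 + (x4 + (x5 + 0)))))) => // hs; exfalso.
  have h4 : x4 <= 1 by lia.
  have h5 : x5 <= 1 by lia.
  case: x4 h4 Hv hs => [|[|]] // _ Hv hs; case: x5 h5 Hv hs => [|[|]] // _ Hv hs; lia.
- rewrite (grd5_top 2 3 c (c+1)); [|lia|lia].
  rewrite (_ : 2*c - (c+1) = c - 1); last lia.
  rewrite /grd /= (divn_small (_ : c - 1 < c+1)); last lia.
  rewrite (modn_small (_ : c - 1 < c+1)); last lia.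
  rewrite (divn_small (_ : c - 1 < c)); last lia.
  rewrite (modn_small (_ : c - 1 < c)); last lia.
  rewrite ?divn1 ?modn1; lia.
Qed.

Theorem corollary4 (c2 c3 c4 c5 : nat) :
  is_system [:: 1; c2; c3; c4; c5; 2 * c5 - c2] ->
  (canonical [:: 1; c2; c3; c4; c5; 2 * c5 - c2] /\
   ~ canonical [:: 1; c2; c3; c4; c5])
  <->
  (c2 = 2 /\ c3 = 3 /\ c5 = c4 + 1 /\ 2 * c5 - c2 = 2 * c4 /\ 4 < c4).
Proof.
move=> [_ /= Hs].
move: Hs => /andP[h1 /andP[h2 /andP[h3 /andP[h4 /andP[h5 _]]]]].
split.
- move=> [HC HS].
  have [E2 [E3 [E5 E4]]] := fwd c2 c3 c4 c5 h1 h2 h3 h4 h5 HC HS.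
  split; first done; split; first done; split; first done; split; lia.
- move=> [E2 [E3 [E5 [E6 E4]]]].
  rewrite E6 E2 E3 E5; split; [exact: canonC | exact: noncanonS].
Qed.
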